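(* Consider a 3-S 3-D MUN-D (as in the context) in which the min-cut between $S_i$ and $T_j$ is at least $1$ for all $i\neq j$. Let $n'$ be a positive integer, $n=2n'+1$, with $p\nmid 2n'+1$; let $m$ be such that $n\mid p^m-1$ and $\alpha\in\mathbb{F}_{p^m}$ of multiplicative order $n$. Regard the LECs $\underline{\varepsilon}$ as indeterminates and let $\hat M_{ij}=\mathrm{diag}\big(M_{ij}(\alpha^0),\dots,M_{ij}(\alpha^{n-1})\big)$ (invertible over $\mathbb{F}_{p^m}(\underline{\varepsilon})$). Put $\hat U=\hat M_{12}^{-1}\hat M_{32}\hat M_{31}^{-1}\hat M_{21}\hat M_{23}^{-1}\hat M_{13}$, $\hat R=\hat M_{13}\hat M_{23}^{-1}$, $\hat S=\hat M_{12}\hat M_{32}^{-1}$, $W=[1\ 1\ \cdots\ 1]^T$ of length $n$, and $V_1=[W\ \hat UW\ \cdots\ \hat U^{n'}W]$ ($n\times(n'+1)$), $V_2=[\hat RW\ \hat R\hat UW\ \cdots\ \hat R\hat U^{n'-1}W]$ ($n\times n'$), $V_3=[\hat S\hat UW\ \hat S\hat U^2W\ \cdots\ \hat S\hat U^{n'}W]$ ($n\times n'$). If $$\mathrm{Rank}[V_1\ \ \hat M_{11}^{-1}\hat M_{21}V_2]=\mathrm{Rank}[\hat M_{12}^{-1}\hat M_{22}V_2\ \ V_1]=\mathrm{Rank}[\hat M_{13}^{-1}\hat M_{33}V_3\ \ V_1]=2n'+1$$ over $\mathbb{F}_{p^m}(\underline{\varepsilon})$, then there is an assignment of values to the LECs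 from a finite extension of $\mathbb{F}_{p^m}$ under which, in the system $Y_j=\sum_{i=1}^3\hat M_{ij}V_iX_i'$ ($j=1,2,3$) with $X_1'$ of length $n'+1$ and $X_2',X_3'$ of length $n'$, each $X_j'$ can be exactly recovered from $Y_j$ (i.e. there is a matrix $G_j$ with $G_jY_j=X_j'$ for all $X_1',X_2',X_3'$).
   Context: A three-source three-destination multiple unicast network with delays (3-S 3-D MUN-D) is a finite directed acyclic graph whose links each carry one symbol of $\mathbb{F}_{p^m}$ per time unit with unit delay, with sources $S_1,S_2,S_3$ each generating one process and destinations $T_1,T_2,T_3$ each with one output, $T_i$ demanding the process of $S_i$; the min-cut between $S_i$ and $T_i$ is $1$. Linear network coding with time-invariant local encoding coefficients (LECs) $\underline{\varepsilon}$ is used (each link symbol at time $t+1$ is an LEC-weighted combination of the source symbol at its tail, if any, and of the incoming link symbols of its tail at time $t$; destination outputs are LEC-weighted combinations of incoming link symbols of the previous time). The transfer function from $S_i$ to $T_j$ is $D^{d'_{min}}M_{ij}(D)$, $M_{ij}(D)=\sum_{d=0}^{d_{max}}M_{ij}^{(d)}D^d$, with $d'_{min}$ the minimum path delay over all pairs and coefficients polynomial in $\underline{\varepsilon}$. Meaning of the model: each source transmits $n>d_{max}$ generations preceded by a cyclic prefix of its last $d_{max}$ generations, after applying a length-$n$ DFT (with parameter $\alpha$) to the precoded block $V_iX_i'$; each destination discards the prefix and applies the inverse DFT, yielding $Y_j=\sum_i\hat M_{ij}V_iX_i'$. *)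

(* Defs.v *)
From HB Require Import structures.
From mathcomp Require Import all_boot all_order all_algebra all_field.
From mathcomp Require Import fraction mpoly.
Set Implicit Arguments. Unset Strict Implicit. Unset Printing Implicit Defensive.
Import Order.TTheory GRing.Theory Num.Theory.
Local Open Scope ring_scope.

Record network := Network {
  node : finType;
  link : finType;
  ltail : link -> node;
  lhead : link -> node;
  src : 'I_3 -> node;
  dst : 'I_3 -> node }.

Definition adj_avoid (N : network) (C : {set link N}) : rel (node N) :=
  fun u v => [exists e, (e \notin C) && (ltail e == u) && (lhead e == v)].

Definition acyclic (N : network) : Prop :=
  forall e : link N, ~~ connect (adj_avoid set0) (lhead e) (ltail e).

Definition reach_avoid (N : network) (C : {set link N}) (s t : node N) : bool :=
  [exists e, (e \notin C) && (ltail e == s) && connect (adj_avoid C) (lhead e) t].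

Definition mincut (N : network) (s t : node N) : nat :=
  \big[minn/#|link N|]_(C : {set link N} | ~~ reach_avoid C s t) #|C|.

(* Local encoding coefficients (LECs), as indeterminates.                   *)
(*   inl (inl (i, e)) : coefficient of source process i on link e           *)
(*                      (used when the tail of e is S_i)                    *)
(*   inl (inr (e', e)): coefficient of incoming link e' on link e           *)
(*                      (used when head e' = tail e)                        *)
(*   inr (e, j)       : coefficient of incoming link e at output of T_j     *)
(*                      (used when head e = T_j)                            *)
Definition LEC (N : network) : finType :=
  (('I_3 * link N + link N * link N) + link N * 'I_3)%type.

Definition nLEC (N : network) : nat := #|LEC N|.

Section Transfer.
Variables (F : fieldType) (N : network).
Local Notation MP := {mpoly F[nLEC N]}.

Definition lec (l : LEC N) : MP := 'X_(enum_rank l).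

(* g i k e : sum over paths S_i -> ... -> e using k+1 links of the product of
   the LECs along the path (source LEC, then link-to-link LECs) *)
Fixpoint gpath (i : 'I_3) (k : nat) (e : link N) : MP :=
  match k with
  | 0 => if ltail e == src N i then lec (inl (inl (i, e))) else 0
  | k'.+1 => \sum_(e' : link N | lhead e' == ltail e)
               lec (inl (inr (e', e))) * gpath i k' e'
  end.

(* coefficient of D^(k+2) in the transfer function from S_i to T_j:
   paths with k+1 links have delay k+2 (one unit per link plus one unit at
   the destination output). In an acyclic network paths have < #|link| + 1
   links, so k < #|link| suffices. *)
Definition tcoef (i j : 'I_3) (k : nat) : MP :=
  \sum_(e : link N | lhead e == dst N j) gpath i k e * lec (inr (e, j)).

Definition transfer (i j : 'I_3) : {poly MP} :=
  \sum_(k < #|link N|) (tcoef i j k)%:P * 'X^(k.+2).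

Definition dmin : nat :=
  \big[minn/(#|link N|.+2)]_(t : 'I_3 * 'I_3 * 'I_#|link N|
                              | tcoef t.1.1 t.1.2 t.2 != 0) (t.2 : nat).+2.

(* M_ij(D), with transfer S_i -> T_j = D^dmin * M_ij(D) *)
Definition Mpoly (i j : 'I_3) : {poly MP} :=
  \sum_(k < #|link N|) (tcoef i j k)%:P * 'X^(k.+2 - dmin).

Definition Meval (alpha : F) (i j : 'I_3) (k : nat) : MP :=
  (Mpoly i j).[(alpha ^+ k)%:MP].

End Transfer.

(* The precoding scheme, over an arbitrary field K, given the nine n x n    *)
(* matrices Mh i j = \hat M_{i+1,j+1}, with n = 2n'+1.                      *)
Section Scheme.
Variables (K : fieldType) (n' : nat).
Local Notation n := (n'.*2).+1.
Variable Mh : 'I_3 -> 'I_3 -> 'M[K]_n.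

Definition i1 : 'I_3 := 0. Definition i2 : 'I_3 := 1. Definition i3 : 'I_3 := 2.

Definition Uhat : 'M[K]_n :=
  invmx (Mh i1 i2) *m Mh i3 i2 *m invmx (Mh i3 i1) *m Mh i2 i1
    *m invmx (Mh i2 i3) *m Mh i1 i3.
Definition Rhat : 'M[K]_n := Mh i1 i3 *m invmx (Mh i2 i3).
Definition Shat : 'M[K]_n := Mh i1 i2 *m invmx (Mh i3 i2).

Definition Wvec : 'cV[K]_n := const_mx 1.

Definition V1 : 'M[K]_(n, n'.+1) :=
  \matrix_(r < n, k < n'.+1) (Uhat ^+ k *m Wvec) r 0.
Definition V2 : 'M[K]_(n, n') :=
  \matrix_(r < n, k < n') (Rhat *m Uhat ^+ k *m Wvec) r 0.
Definition V3 : 'M[K]_(n, n') :=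
  \matrix_(r < n, k < n') (Shat *m Uhat ^+ k.+1 *m Wvec) r 0.

Definition Yout (j : 'I_3) (X1 : 'cV[K]_(n'.+1)) (X2 X3 : 'cV[K]_n') : 'cV[K]_n :=
  Mh i1 j *m V1 *m X1 + Mh i2 j *m V2 *m X2 + Mh i3 j *m V3 *m X3.

Definition decodable : Prop :=
  [/\ exists G1 : 'M[K]_(n'.+1, n), forall X1 X2 X3, G1 *m Yout i1 X1 X2 X3 = X1,
      exists G2 : 'M[K]_(n', n), forall X1 X2 X3, G2 *m Yout i2 X1 X2 X3 = X2
    & exists G3 : 'M[K]_(n', n), forall X1 X2 X3, G3 *m Yout i3 X1 X2 X3 = X3].

Definition rank_conditions : Prop :=
  [/\ \rank (row_mx V1 (invmx (Mh i1 i1) *m Mh i2 i1 *m V2)) = n,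
      \rank (row_mx (invmx (Mh i1 i2) *m Mh i2 i2 *m V2) V1) = n
    & \rank (row_mx (invmx (Mh i1 i3) *m Mh i3 i3 *m V3) V1) = n].

End Scheme.

(* \hat M_ij over an arbitrary field K, obtained from M_ij(alpha^k) (a
   polynomial in the LECs) through a map phi into K (the embedding into the
   fraction field, or evaluation at an assignment of the LECs). *)
Definition Mhat (F : fieldType) (N : network) (K : fieldType)
  (phi : {mpoly F[nLEC N]} -> K) (alpha : F) (n' : nat) (i j : 'I_3)
  : 'M[K]_((n'.*2).+1) :=
  diag_mx (\row_(k < (n'.*2).+1) phi (Meval N alpha i j k)).

Definition lec_eval (F : fieldType) (N : network) (L : fieldExtType F)
  (eps : LEC N -> L) (q : {mpoly F[nLEC N]}) : L :=
  mmap (in_alg L) (fun v => eps (enum_val v)) q.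

Definition lec_ratfun (F : fieldType) (N : network) : fieldType :=
  {fraction {mpoly F[nLEC N]}}.
Definition to_ratfun (F : fieldType) (N : network)
  (q : {mpoly F[nLEC N]}) : lec_ratfun F N := FracField.tofrac q.

(* Main.v *)
Require Import Defs.
From HB Require Import structures.
From mathcomp Require Import all_boot all_order all_algebra all_field.
From mathcomp Require Import fraction mpoly.
From mathcomp.algebra_tactics Require Import ring.
Set Implicit Arguments. Unset Strict Implicit. Unset Printing Implicit Defensive.
Import GRing.Theory.
Local Open Scope ring_scope.


Lemma invmx_diag (K : fieldType) (n : nat) (x : 'rV[K]_n) :
  (forall r, x 0 r != 0) ->
  invmx (diag_mx x) = diag_mx (\row_r (x 0 r)^-1).
Proof.
move=> nz.
have H : diag_mx x *m diag_mx (\row_r (x 0 r)^-1) = 1%:M.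
  rewrite mulmx_diag; apply/matrixP => i j; rewrite !mxE.
  by rewrite mulfV.
have [U _] := mulmx1_unit H.
by rewrite -[RHS](mulKmx U) H mulmx1.
Qed.

Lemma diag_unit (K : fieldType) (n : nat) (x : 'rV[K]_n) :
  (forall r, x 0 r != 0) -> diag_mx x \in unitmx.
Proof.
move=> nz; rewrite unitmxE det_diag unitfE; apply/prodf_neq0 => i _; exact: nz.
Qed.

Lemma castmx_rank (K : fieldType) (n m1 m2 : nat) (e : m1 = m2) (A : 'M[K]_(n, m1)) :
  \rank (castmx (erefl n, e) A) = \rank A.
Proof. by case: m2 / e; rewrite castmx_id. Qed.

Lemma map_castmx' (R S : pzRingType) (f : {rmorphism R -> S}) (n m1 m2 : nat) (e : m1 = m2)
  (A : 'M[R]_(n, m1)) :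
  map_mx f (castmx (erefl n, e) A) = castmx (erefl n, e) (map_mx f A).
Proof. by case: m2 / e; rewrite !castmx_id. Qed.

Lemma rank_unit_left (K : fieldType) (n m : nat) (U : 'M[K]_n) (B : 'M[K]_(n, m)) :
  U \in unitmx -> \rank (U *m B) = \rank B.
Proof.
move=> uU; rewrite -mxrank_tr trmx_mul mxrankMfree ?mxrank_tr //.
by rewrite row_free_unit unitmx_tr.
Qed.

Lemma left_inv (K : fieldType) (n m : nat) (A : 'M[K]_(n, m)) :
  \rank A = m -> exists H : 'M_(m, n), H *m A = 1%:M.
Proof.
move=> rA.
have : row_free A^T by rewrite /row_free mxrank_tr rA.
case/row_freeP => B HB; exists B^T.
by rewrite -[A]trmxK -trmx_mul HB trmx1.
Qed.

Lemma decode_gen (K : fieldType) (n a b : nat) (M : 'M[K]_n) (A : 'M[K]_(n, a + b)) :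
  M \in unitmx -> \rank A = (a + b)%N ->
  exists G : 'M_(a, n), forall (Xa : 'cV_a) (Z : 'cV_b), G *m (M *m (A *m col_mx Xa Z)) = Xa.
Proof.
move=> uM rA; have [H HA] := left_inv rA.
exists (row_mx 1%:M 0 *m H *m invmx M) => Xa Z.
rewrite -!mulmxA mulKmx // (mulmxA H) HA mul1mx mul_row_col mul1mx mul0mx addr0.
done.
Qed.

Lemma rank_square (K : fieldType) (n : nat) (A : 'M[K]_n) :
  (\rank A = n) <-> (\det A != 0).
Proof.
rewrite -unitfE -unitmxE -row_free_unit /row_free; split; [by move=> ->|by move/eqP].
Qed.

Lemma expr_div_le (K : fieldType) (P Q : K) (c N : nat) :
  Q != 0 -> (c <= N)%N -> (P / Q) ^+ c = P ^+ c * Q ^+ (N - c) / Q ^+ N.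
Proof.
move=> nzQ le; rewrite -{2}(subnKC le) exprD expr_div_n.
have nz1 : Q ^+ c != 0 by rewrite expf_neq0.
have nz2 : Q ^+ (N - c) != 0 by rewrite expf_neq0.
by field; rewrite nz1 nz2.
Qed.

Section Generic.
Variables (R : comNzRingType) (n' : nat).
Local Notation n := (n'.*2).+1.
Variable d : 'I_3 -> 'I_3 -> 'I_n -> R.
Definition Pg r := d i3 i2 r * d i2 i1 r * d i1 i3 r.
Definition Qg r := d i1 i2 r * d i3 i1 r * d i2 i3 r.
Definition B1 : 'M[R]_(n, n'.+1 + n') :=
  row_mx (\matrix_(r < n, c < n'.+1) (d i1 i1 r * d i2 i3 r * Pg r ^+ c * Qg r ^+ (n' - c)))
         (\matrix_(r < n, c < n') (d i2 i1 r * d i1 i3 r * Pg r ^+ c * Qg r ^+ (n' - c))).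
Definition B2 : 'M[R]_(n, n' + n'.+1) :=
  row_mx (\matrix_(r < n, c < n') (d i2 i2 r * d i1 i3 r * Pg r ^+ c * Qg r ^+ (n' - c)))
         (\matrix_(r < n, c < n'.+1) (d i1 i2 r * d i2 i3 r * Pg r ^+ c * Qg r ^+ (n' - c))).
Definition B3 : 'M[R]_(n, n' + n'.+1) :=
  row_mx (\matrix_(r < n, c < n') (d i3 i3 r * d i1 i2 r * Pg r ^+ c.+1 * Qg r ^+ (n' - c.+1)))
         (\matrix_(r < n, c < n'.+1) (d i1 i3 r * d i3 i2 r * Pg r ^+ c * Qg r ^+ (n' - c))).
End Generic.

Lemma map_B1 (R S : comNzRingType) (f : {rmorphism R -> S}) n' d :
  map_mx f (@B1 R n' d) = B1 (fun i j r => f (d i j r)).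
Proof.
rewrite /B1 map_row_mx; congr row_mx; apply/matrixP => r c;
  by rewrite !mxE !rmorphM !rmorphXn /Pg /Qg !rmorphM.
Qed.
Lemma map_B2 (R S : comNzRingType) (f : {rmorphism R -> S}) n' d :
  map_mx f (@B2 R n' d) = B2 (fun i j r => f (d i j r)).
Proof.
rewrite /B2 map_row_mx; congr row_mx; apply/matrixP => r c;
  by rewrite !mxE !rmorphM !rmorphXn /Pg /Qg !rmorphM.
Qed.
Lemma map_B3 (R S : comNzRingType) (f : {rmorphism R -> S}) n' d :
  map_mx f (@B3 R n' d) = B3 (fun i j r => f (d i j r)).
Proof.
rewrite /B3 map_row_mx; congr row_mx; apply/matrixP => r c;
  by rewrite !mxE !rmorphM !rmorphXn /Pg /Qg !rmorphM.
Qed.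

Section Scheme.
Variables (K : fieldType) (n' : nat).
Local Notation n := (n'.*2).+1.
Variable d : 'I_3 -> 'I_3 -> 'I_n -> K.
Hypothesis dnz : forall i j r, d i j r != 0.

Definition Mhd i j : 'M[K]_n := diag_mx (\row_(k < n) d i j k).

Let a i j r := d i j r.
Definition Pf r := Pg d r.
Definition Qf r := Qg d r.

Lemma Qf_nz r : Qf r != 0.
Proof. by rewrite /Qf /Qg !mulf_neq0. Qed.

Lemma invMhd i j : invmx (Mhd i j) = diag_mx (\row_r (d i j r)^-1).
Proof.
rewrite /Mhd invmx_diag; last by move=> r; rewrite mxE.
by congr diag_mx; apply/rowP => r; rewrite !mxE.
Qed.

Lemma Uhat_diag : Uhat Mhd = diag_mx (\row_r (Pf r / Qf r)).
Proof.
rewrite /Uhat !invMhd /Mhd !mulmx_diag; congr diag_mx; apply/rowP => r.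
rewrite !mxE /Pf /Qf /Pg /Qg.
have := dnz i1 i2 r; have := dnz i3 i1 r; have := dnz i2 i3 r => h1 h2 h3.
by field; rewrite h1 h2 h3.
Qed.

Lemma Rhat_diag : Rhat Mhd = diag_mx (\row_r (d i1 i3 r / d i2 i3 r)).
Proof. by rewrite /Rhat invMhd /Mhd mulmx_diag; congr diag_mx; apply/rowP => r; rewrite !mxE. Qed.

Lemma Shat_diag : Shat Mhd = diag_mx (\row_r (d i1 i2 r / d i3 i2 r)).
Proof. by rewrite /Shat invMhd /Mhd mulmx_diag; congr diag_mx; apply/rowP => r; rewrite !mxE. Qed.

Lemma diag_pow (x : 'rV[K]_n) k : (diag_mx x) ^+ k = diag_mx (\row_r (x 0 r ^+ k)).
Proof.
elim: k => [|k IH].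
  by rewrite expr0; apply/matrixP => i j; rewrite !mxE expr0.
rewrite exprS IH -mulmxE mulmx_diag; congr diag_mx; apply/rowP => r.
by rewrite !mxE exprS.
Qed.

Definition uf r := Pf r / Qf r.

Lemma V1E r c : V1 Mhd r c = uf r ^+ c.
Proof.
by rewrite /V1 mxE Uhat_diag diag_pow (@mul_diag_mx K) !mxE mulr1.
Qed.

Lemma V2E r c : V2 Mhd r c = d i1 i3 r / d i2 i3 r * uf r ^+ c.
Proof.
by rewrite /V2 mxE Uhat_diag diag_pow Rhat_diag -mulmxA !(@mul_diag_mx K) !mxE mulr1.
Qed.

Lemma V3E r c : V3 Mhd r c = d i1 i2 r / d i3 i2 r * uf r ^+ c.+1.
Proof.
by rewrite /V3 mxE Uhat_diag diag_pow Shat_diag -mulmxA !(@mul_diag_mx K) !mxE mulr1.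
Qed.

Lemma V1M : V1 Mhd = \matrix_(r, c) (uf r ^+ c).
Proof. by apply/matrixP => r c; rewrite V1E mxE. Qed.
Lemma V2M : V2 Mhd = \matrix_(r, c) (d i1 i3 r / d i2 i3 r * uf r ^+ c).
Proof. by apply/matrixP => r c; rewrite V2E mxE. Qed.
Lemma V3M : V3 Mhd = \matrix_(r, c) (d i1 i2 r / d i3 i2 r * uf r ^+ c.+1).
Proof. by apply/matrixP => r c; rewrite V3E mxE. Qed.

Lemma dz i j r : d i j r != 0. Proof. exact: dnz. Qed.

Lemma A1E : row_mx (V1 Mhd) (invmx (Mhd i1 i1) *m Mhd i2 i1 *m V2 Mhd)
  = diag_mx (\row_r (d i1 i1 r * d i2 i3 r * Qf r ^+ n')^-1) *m B1 d.
Proof.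
rewrite /B1 mul_mx_row V1M V2M invMhd /Mhd -mulmxA !(@mul_diag_mx K).
congr row_mx; apply/matrixP => r c; rewrite !mxE /uf.
  rewrite (@expr_div_le _ _ _ c n'); last by rewrite -ltnS ltn_ord.
  2: exact: Qf_nz.
  rewrite -/(Pf r) -/(Qf r).
  have hz : Qf r ^+ n' != 0 by rewrite expf_neq0 ?Qf_nz.
  have h1 := dz i1 i1 r; have h2 := dz i2 i3 r.
  move: (Pf r ^+ c) (Qf r ^+ (n' - c)) hz => x y hz.
  by field; rewrite hz h1 h2.
rewrite (@expr_div_le _ _ _ c n'); last by rewrite ltnW ?ltn_ord.
2: exact: Qf_nz.
rewrite -/(Pf r) -/(Qf r).
have hz : Qf r ^+ n' != 0 by rewrite expf_neq0 ?Qf_nz.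
have h1 := dz i1 i1 r; have h2 := dz i2 i3 r.
move: (Pf r ^+ c) (Qf r ^+ (n' - c)) hz => x y hz.
by field; rewrite hz h1 h2.
Qed.

Lemma A2E : row_mx (invmx (Mhd i1 i2) *m Mhd i2 i2 *m V2 Mhd) (V1 Mhd)
  = diag_mx (\row_r (d i1 i2 r * d i2 i3 r * Qf r ^+ n')^-1) *m B2 d.
Proof.
rewrite /B2 mul_mx_row V1M V2M invMhd /Mhd -mulmxA !(@mul_diag_mx K).
congr row_mx; apply/matrixP => r c; rewrite !mxE /uf.
  rewrite (@expr_div_le _ _ _ c n'); last by rewrite ltnW ?ltn_ord.
  2: exact: Qf_nz.
  rewrite -/(Pf r) -/(Qf r).
  have hz : Qf r ^+ n' != 0 by rewrite expf_neq0 ?Qf_nz.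
  have h1 := dz i1 i2 r; have h2 := dz i2 i3 r.
  move: (Pf r ^+ c) (Qf r ^+ (n' - c)) hz => x y hz.
  by field; rewrite hz h1 h2.
rewrite (@expr_div_le _ _ _ c n'); last by rewrite -ltnS ltn_ord.
2: exact: Qf_nz.
rewrite -/(Pf r) -/(Qf r).
have hz : Qf r ^+ n' != 0 by rewrite expf_neq0 ?Qf_nz.
have h1 := dz i1 i2 r; have h2 := dz i2 i3 r.
move: (Pf r ^+ c) (Qf r ^+ (n' - c)) hz => x y hz.
by field; rewrite hz h1 h2.
Qed.

Lemma A3E : row_mx (invmx (Mhd i1 i3) *m Mhd i3 i3 *m V3 Mhd) (V1 Mhd)
  = diag_mx (\row_r (d i1 i3 r * d i3 i2 r * Qf r ^+ n')^-1) *m B3 d.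
Proof.
rewrite /B3 mul_mx_row V1M V3M invMhd /Mhd -mulmxA !(@mul_diag_mx K).
congr row_mx; apply/matrixP => r c; rewrite !mxE /uf.
  rewrite (@expr_div_le _ _ _ c.+1 n'); last by rewrite ltn_ord.
  2: exact: Qf_nz.
  rewrite -/(Pf r) -/(Qf r).
  have hz : Qf r ^+ n' != 0 by rewrite expf_neq0 ?Qf_nz.
  have h1 := dz i1 i3 r; have h2 := dz i3 i2 r.
  move: (Pf r ^+ c.+1) (Qf r ^+ (n' - c.+1)) hz => x y hz.
  by field; rewrite hz h1 h2.
rewrite (@expr_div_le _ _ _ c n'); last by rewrite -ltnS ltn_ord.
2: exact: Qf_nz.
rewrite -/(Pf r) -/(Qf r).
have hz : Qf r ^+ n' != 0 by rewrite expf_neq0 ?Qf_nz.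
have h1 := dz i1 i3 r; have h2 := dz i3 i2 r.
move: (Pf r ^+ c) (Qf r ^+ (n' - c)) hz => x y hz.
by field; rewrite hz h1 h2.
Qed.

Lemma eqA : (n'.+1 + n')%N = n. Proof. by rewrite addSn addnn. Qed.
Lemma eqB : (n' + n'.+1)%N = n. Proof. by rewrite addnS addnn. Qed.

Lemma gam_nz (x y : 'I_n -> K) : (forall r, x r != 0) -> (forall r, y r != 0) ->
  forall r, (\row_r (x r * y r * Qf r ^+ n')^-1) 0 r != 0.
Proof.
move=> hx hy r; rewrite mxE invr_neq0 // !mulf_neq0 ?expf_neq0 ?Qf_nz //.
Qed.

Lemma rank_A1 : \rank (row_mx (V1 Mhd) (invmx (Mhd i1 i1) *m Mhd i2 i1 *m V2 Mhd)) = n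
  <-> \det (castmx (erefl n, eqA) (B1 d)) != 0.
Proof.
rewrite A1E rank_unit_left; last by apply: diag_unit; apply: gam_nz => r; exact: dz.
by rewrite -(castmx_rank eqA) rank_square.
Qed.

Lemma rank_A2 : \rank (row_mx (invmx (Mhd i1 i2) *m Mhd i2 i2 *m V2 Mhd) (V1 Mhd)) = n
  <-> \det (castmx (erefl n, eqB) (B2 d)) != 0.
Proof.
rewrite A2E rank_unit_left; last by apply: diag_unit; apply: gam_nz => r; exact: dz.
by rewrite -(castmx_rank eqB) rank_square.
Qed.

Lemma rank_A3 : \rank (row_mx (invmx (Mhd i1 i3) *m Mhd i3 i3 *m V3 Mhd) (V1 Mhd)) = n
  <-> \det (castmx (erefl n, eqB) (B3 d)) != 0.
Proof.
rewrite A3E rank_unit_left; last by apply: diag_unit; apply: gam_nz => r; exact: dz.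
by rewrite -(castmx_rank eqB) rank_square.
Qed.

Lemma sum_delta (k : nat) (f : 'I_k -> K) (j0 : 'I_k) :
  \sum_i f i * (i == j0)%:R = f j0.
Proof.
rewrite (bigD1 j0) //= eqxx mulr1 big1 ?addr0 // => i /negbTE ->; by rewrite mulr0.
Qed.

Definition Sh : 'M[K]_(n'.+1, n') := \matrix_(c', c) ((c' == lift ord0 c)%:R).
Definition Em : 'M[K]_(n'.+1, n') := \matrix_(c', c) ((c' == widen_ord (leqnSn n') c)%:R).

Lemma MhdU i j : Mhd i j \in unitmx.
Proof. by apply: diag_unit => r; rewrite mxE. Qed.

Lemma al1 : Mhd i3 i1 *m V3 Mhd = Mhd i2 i1 *m V2 Mhd.
Proof.
rewrite V2M V3M /Mhd !(@mul_diag_mx K); apply/matrixP => r c; rewrite !mxE /uf.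
rewrite exprS -/(Pf r) -/(Qf r) /Pf /Qf /Pg /Qg.
have h1 := dz i1 i2 r; have h2 := dz i3 i1 r; have h3 := dz i2 i3 r; have h4 := dz i3 i2 r.
move: (_ ^+ c) => x.
by field; rewrite h1 h2 h3 h4.
Qed.

Lemma al2 : Mhd i3 i2 *m V3 Mhd = Mhd i1 i2 *m V1 Mhd *m Sh.
Proof.
rewrite -mulmxA V1M V3M /Mhd.
have -> : (\matrix_(r, c) (uf r ^+ c)) *m Sh = \matrix_(r < n, c < n') (uf r ^+ c.+1).
  apply/matrixP => r c; rewrite !mxE.
  under eq_bigr do rewrite !mxE.
  by rewrite sum_delta lift0.
rewrite !(@mul_diag_mx K); apply/matrixP => r c; rewrite !mxE.
have h4 := dz i3 i2 r.
move: (_ ^+ c.+1) => x.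
by field.
Qed.

Lemma al3 : Mhd i2 i3 *m V2 Mhd = Mhd i1 i3 *m V1 Mhd *m Em.
Proof.
rewrite -mulmxA V1M V2M /Mhd.
have -> : (\matrix_(r, c) (uf r ^+ c)) *m Em = \matrix_(r < n, c < n') (uf r ^+ c).
  apply/matrixP => r c; rewrite !mxE.
  under eq_bigr do rewrite !mxE.
  by rewrite sum_delta.
rewrite !(@mul_diag_mx K); apply/matrixP => r c; rewrite !mxE.
have h4 := dz i2 i3 r.
move: (_ ^+ c) => x.
by field.
Qed.

Lemma decode : rank_conditions Mhd -> decodable Mhd.
Proof.
case=> r1 r2 r3; split.
- have r1' : \rank (row_mx (V1 Mhd) (invmx (Mhd i1 i1) *m Mhd i2 i1 *m V2 Mhd)) = (n'.+1 + n')%N.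
    by rewrite r1 eqA.
  have [G HG] := decode_gen (MhdU i1 i1) r1'.
  exists G => X1 X2 X3.
  suff -> : Yout Mhd i1 X1 X2 X3 = Mhd i1 i1 *m (row_mx (V1 Mhd)
     (invmx (Mhd i1 i1) *m Mhd i2 i1 *m V2 Mhd) *m col_mx X1 (X2 + X3)) by rewrite HG.
  rewrite /Yout mul_row_col mulmxDr !mulmxA mulmxV ?MhdU // mul1mx al1.
  by rewrite mulmxDr addrA.
- have r2' : \rank (row_mx (invmx (Mhd i1 i2) *m Mhd i2 i2 *m V2 Mhd) (V1 Mhd)) = (n' + n'.+1)%N.
    by rewrite r2 eqB.
  have [G HG] := decode_gen (MhdU i1 i2) r2'.
  exists G => X1 X2 X3.
  suff -> : Yout Mhd i2 X1 X2 X3 = Mhd i1 i2 *m (row_mx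
     (invmx (Mhd i1 i2) *m Mhd i2 i2 *m V2 Mhd) (V1 Mhd) *m col_mx X2 (X1 + Sh *m X3)) by rewrite HG.
  rewrite /Yout mul_row_col mulmxDr !mulmxA mulmxV ?MhdU // mul1mx al2.
  by rewrite !mulmxDr !mulmxA addrCA addrA.
- have r3' : \rank (row_mx (invmx (Mhd i1 i3) *m Mhd i3 i3 *m V3 Mhd) (V1 Mhd)) = (n' + n'.+1)%N.
    by rewrite r3 eqB.
  have [G HG] := decode_gen (MhdU i1 i3) r3'.
  exists G => X1 X2 X3.
  suff -> : Yout Mhd i3 X1 X2 X3 = Mhd i1 i3 *m (row_mx
     (invmx (Mhd i1 i3) *m Mhd i3 i3 *m V3 Mhd) (V1 Mhd) *m col_mx X3 (X1 + Em *m X2)) by rewrite HG.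
  rewrite /Yout mul_row_col mulmxDr !mulmxA mulmxV ?MhdU // mul1mx al3.
  by rewrite !mulmxDr !mulmxA addrC.
Qed.

End Scheme.


Section Point.
Variables (F L : fieldType) (f : {rmorphism F -> L}).

Lemma mmap_ext (n : nat) (h1 h2 : 'I_n -> L) (p : {mpoly F[n]}) :
  h1 =1 h2 -> mmap f h1 p = mmap f h2 p.
Proof. by move=> e; rewrite /mmap; apply: eq_bigr => m _; rewrite (mmap1_eq _ e). Qed.

Definition mw (n : nat) (m : 'X_{1..n.+1}) : 'X_{1..n} :=
  [multinom m (widen_ord (leqnSn n) i) | i < n].

Lemma mw_inj (n : nat) (m1 m2 : 'X_{1..n.+1}) :
  m1 ord_max = m2 ord_max -> mw m1 = mw m2 -> m1 = m2.
Proof.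
move=> emax ew; apply/mnmP => i.
have [lt|ge] := ltnP i n.
  have -> : i = widen_ord (leqnSn n) (Ordinal lt) by apply: val_inj.
  by move/mnmP: ew => /(_ (Ordinal lt)); rewrite !mnmE.
have -> : i = ord_max by apply: val_inj => /=; apply/eqP; rewrite eqn_leq ge -ltnS ltn_ord.
exact: emax.
Qed.

Lemma mmap1_split (n : nat) (v : 'I_n.+1 -> L) (m : 'X_{1..n.+1}) :
  mmap1 v m = mmap1 (fun i => v (widen_ord (leqnSn n) i)) (mw m) * v ord_max ^+ m ord_max.
Proof.
rewrite /mmap1 big_ord_recr /=; congr (_ * _); apply: eq_bigr => i _.
by rewrite mnmE.
Qed.

Definition ccoef (n : nat) (p : {mpoly F[n.+1]}) (k : nat) : {mpoly F[n]} :=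
  \sum_(m <- msupp p) (((m ord_max == k)%:R * p@_m) *: 'X_[mw m]).

Lemma ccoef_coef (n : nat) (p : {mpoly F[n.+1]}) k m' :
  (ccoef p k)@_m' = \sum_(m <- msupp p) ((m ord_max == k)%:R * p@_m * (mw m == m')%:R).
Proof.
rewrite /ccoef raddf_sum /=; apply: eq_bigr => m _.
by rewrite mcoeffZ mcoeffX.
Qed.

Lemma ccoef_supp (n : nat) (p : {mpoly F[n.+1]}) k m' :
  (ccoef p k)@_m' != 0 -> exists2 m, p@_m != 0 & mw m = m'.
Proof.
rewrite ccoef_coef => nz.
have [/hasP[m ms /eqP em]|/hasPn hn] := boolP (has (fun m => mw m == m') (msupp p)).
  by exists m => //; rewrite mcoeff_eq0 negbK.
move: nz; rewrite big1_seq ?eqxx // => m /andP[_ ms].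
by rewrite (negbTE (hn m ms)) mulr0.
Qed.

Lemma ccoef_lead (n : nat) (p : {mpoly F[n.+1]}) m0 :
  m0 \in msupp p -> (ccoef p (m0 ord_max))@_(mw m0) = p@_m0.
Proof.
move=> ms; rewrite ccoef_coef (bigD1_seq m0) ?msupp_uniq //= !eqxx mul1r mulr1.
rewrite big1_seq ?addr0 // => m /andP[ne _].
case: eqP => e1; last by rewrite !mul0r.
case: eqP => e2; last by rewrite mulr0.
by move: ne; rewrite (mw_inj e1 e2) eqxx.
Qed.

Lemma mmap_split (n : nat) (K : nat) (v : 'I_n.+1 -> L) (p : {mpoly F[n.+1]}) :
  (forall m, p@_m != 0 -> (m ord_max < K)%N) ->
  mmap f v p = \sum_(k < K) mmap f (fun i => v (widen_ord (leqnSn n) i)) (ccoef p k)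
                 * v ord_max ^+ k.
Proof.
move=> bnd.
pose v' := fun i => v (widen_ord (leqnSn n) i).
have E k : mmap f v' (ccoef p k) =
   \sum_(m <- msupp p) (m ord_max == k)%:R * (f p@_m * mmap1 v' (mw m)).
  rewrite /ccoef raddf_sum /=; apply: eq_bigr => m _.
  by rewrite mmapZ mmapX rmorphM rmorph_nat mulrA.
under eq_bigr do rewrite E mulr_suml.
rewrite exchange_big /= /mmap; apply: eq_big_seq => m ms.
have lt : (m ord_max < K)%N by apply: bnd; rewrite mcoeff_eq0 negbK.
rewrite (bigD1 (Ordinal lt)) //= eqxx mul1r big1 ?addr0.
  by rewrite mmap1_split mulrA.
move=> k ne; have -> : (m ord_max == k) = false.
  apply/negbTE; apply: contra ne => /eqP e; apply/eqP/val_inj => /=; exact/esym.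
by rewrite mul0r mul0r.
Qed.

Lemma point_exists (rs : seq L) (K : nat) :
  uniq rs -> (K <= size rs)%N ->
  forall (n : nat) (p : {mpoly F[n]}), p != 0 ->
  (forall m, p@_m != 0 -> forall i, (m i < K)%N) ->
  exists v : 'I_n -> L, mmap f v p != 0.
Proof.
move=> urs Krs; elim => [|n IH] p nzp bnd.
  exists (fun i => f 0).
  have -> : p = (p@_0%MM)%:MP.
    apply/mpolyP => m; rewrite mcoeffC.
    have -> : m = 0%MM by apply/mnmP; case.
    by rewrite eqxx mulr1.
  rewrite mmapC fmorph_eq0; apply: contra nzp => /eqP e.
  apply/eqP/mpolyP => m; rewrite mcoeff0.
  by have -> : m = 0%MM by apply/mnmP; case.
have [m0 ms0] : exists m0, m0 \in msupp p.
  case E: (msupp p) => [|m0 s]; last by exists m0; rewrite inE eqxx.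
  by move: nzp; rewrite -msupp_eq0 E.
have nzc : ccoef p (m0 ord_max) != 0.
  apply/negP => /eqP e; have := ccoef_lead ms0.
  by rewrite e mcoeff0 => /esym/eqP; rewrite mcoeff_eq0 ms0.
have bndc : forall m, (ccoef p (m0 ord_max))@_m != 0 -> forall i, (m i < K)%N.
  move=> m /ccoef_supp [m1 nz1 <-] i; rewrite mnmE; exact: bnd.
have [v' hv'] := IH _ nzc bndc.
pose q : {poly L} := \poly_(k < K) mmap f v' (ccoef p k).
have ltK : (m0 ord_max < K)%N by apply: bnd; rewrite mcoeff_eq0 negbK.
have nzq : q != 0.
  apply/eqP => /(congr1 (fun q : {poly L} => q`_(m0 ord_max))).
  rewrite coef_poly ltK coef0 => e; by rewrite e eqxx in hv'.
have [t _ ht] : exists2 t, t \in rs & ~~ root q t.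
  apply/hasP; apply: contraT; rewrite -all_predC => hall.
  have hall' : all (root q) rs.
    by apply/allP => x /(allP hall) /=; rewrite negbK.
  have := max_poly_roots nzq hall' urs.
  by rewrite ltnNge (leq_trans (size_poly _ _) Krs).
pose v : 'I_n.+1 -> L := fun i =>
  if insub (val i) is Some j then v' j else t.
exists v.
have bnd' : forall m, p@_m != 0 -> (m ord_max < K)%N by move=> m /bnd; apply.
rewrite (mmap_split v bnd').
have -> : v ord_max = t by rewrite /v insubF //= ltnn.
have e : forall k, mmap f (fun i => v (widen_ord (leqnSn n) i)) (ccoef p k) = mmap f v' (ccoef p k).
  by move=> k; apply: mmap_ext => i; rewrite /v /= valK.
under eq_bigr do rewrite e.
by move: ht; rewrite /root /q horner_poly.
Qed.

End Point.


Lemma big_ext (F : finFieldType) (p m : nat) (Hp : prime p) (HF : #|F| = (p ^ m)%N) (K : nat) :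
  exists (L : fieldExtType F) (rs : seq L), uniq rs /\ (K <= size rs)%N.
Proof.
have chF : p \in [pchar F] by apply: card_finPcharP HF Hp.
pose M := (p * K).+1.
pose q : {poly F} := 'X^M - 1.
have nzq : q != 0 by rewrite -size_poly_eq0 size_Xn_sub_1.
have [L [rs Drs _]] := FinSplittingFieldFor nzq.
exists L, rs.
have chL : p \in [pchar L] by rewrite pchar_lalg.
have Eq : map_poly (in_alg L) q = 'X^M - 1.
  by rewrite /q rmorphB rmorphXn /= map_polyX rmorph1.
rewrite Eq in Drs.
split.
  rewrite -separable_prod_XsubC -(eqp_separable Drs) separable_Xn_sub_1 //.
  by rewrite /M -addn1 natrD natrM pcharf0 // mul0r add0r oner_eq0.
have := eqp_size Drs; rewrite size_prod_XsubC size_Xn_sub_1 // => [[<-]].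
by apply: leq_trans (leq_pmull K (prime_gt0 Hp)) (leqnSn _).
Qed.


Section Net.
Variable N : network.

Definition lrel : rel (link N) := fun a b => lhead a == ltail b.

Lemma bigmin_le_seq (I : eqType) (r : seq I) (P : pred I) (F : I -> nat) x i0 :
  i0 \in r -> P i0 -> (\big[minn/x]_(i <- r | P i) F i <= F i0)%N.
Proof.
elim: r => [|a r IH] //; rewrite inE big_cons => /orP[/eqP -> ->|ins pi].
  exact: geq_minl.
case: ifP => _; last exact: IH.
exact: leq_trans (geq_minr _ _) (IH ins pi).
Qed.

Lemma mincut_reach (s t : node N) : (1 <= mincut s t)%N -> reach_avoid set0 s t.
Proof.
apply: contraTT => nr; rewrite -ltnNge ltnS leqn0 /mincut.
have := @bigmin_le_seq _ (index_enum {set link N}) (fun C => ~~ reach_avoid C s t)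
  (fun C => #|C|) #|link N| set0 (mem_index_enum _) nr.
by rewrite cards0 leqn0.
Qed.

Lemma walk_of_path (x : node N) (p : seq (node N)) :
  path (adj_avoid set0) x p -> forall e, lhead e = x ->
  exists es, path lrel e es /\ lhead (last e es) = last x p.
Proof.
elim: p x => [|y p IH] x /=.
  by move=> _ e he; exists [::].
case/andP => /existsP[e' /andP[/andP[_ /eqP t'] /eqP h']] hp e he.
have [es [hes hl]] := IH y hp e' h'.
exists (e' :: es); split => //=.
by rewrite hes andbT /lrel he t'.
Qed.

Lemma walk_conn (e : link N) (es : seq (link N)) e' :
  path lrel e es -> e' \in es -> connect (adj_avoid set0) (lhead e) (ltail e').
Proof.
elim: es e => [|a es IH] e //= /andP[/eqP ea pa].
rewrite inE => /orP[/eqP -> | ins]; first by rewrite ea connect0.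
apply: connect_trans (IH a pa ins); rewrite ea; apply: connect1.
by apply/existsP; exists a; rewrite inE !eqxx.
Qed.

Lemma walk_uniq (e : link N) (es : seq (link N)) :
  acyclic N -> path lrel e es -> uniq (e :: es).
Proof.
move=> ac; elim: es e => [|a es IH] e //= /andP[ea pa].
have := IH a pa => /= /andP[na ua].
rewrite na ua !andbT; apply/negP => /orP[/eqP ae | ins].
  by move/eqP: ea; rewrite ae => ea; have := ac a; rewrite ea connect0.
have := ac e; rewrite (connect_trans _ (walk_conn pa ins)) //.
rewrite (eqP ea); apply: connect1; by apply/existsP; exists a; rewrite inE !eqxx.
Qed.

Lemma walk_exists (s t : node N) : acyclic N -> reach_avoid set0 s t ->
  exists e0 es, [/\ ltail e0 = s, path lrel e0 es, lhead (last e0 es) = t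
                  & uniq (e0 :: es)].
Proof.
move=> ac /existsP[e /andP[/andP[_ /eqP te] /connectP[p hp ->]]].
have [es [hes hl]] := walk_of_path hp (erefl (lhead e)).
exists e, es; split => //; exact: walk_uniq.
Qed.

End Net.

Section Eval.
Variables (F : fieldType) (N : network) (i j : 'I_3) (e0 : link N) (es : seq (link N)).
Hypotheses (Htail : ltail e0 = src N i) (Hpath : path (@lrel N) e0 es)
  (Hhead : lhead (last e0 es) = dst N j) (Huniq : uniq (e0 :: es)).
Local Notation w := (e0 :: es).

Definition chi (l : LEC N) : bool :=
  match l with
  | inl (inl (i', e)) => (i' == i) && (e == e0)
  | inl (inr (e', e)) => (e' \in w) && ((index e' w).+1 < size w)%N
                          && (e == nth e0 w (index e' w).+1)
  | inr (e, j') => (j' == j) && (e == last e0 es)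
  end.

Definition vv : 'I_(nLEC N) -> F := fun k => (chi (enum_val k))%:R.

Lemma meval_lec l : meval vv (lec F l) = (chi l)%:R.
Proof. by rewrite /lec mevalXU /vv enum_rankK. Qed.

Lemma gpath_eval t e :
  meval vv (gpath F i t e) = ((t < size w)%N && (e == nth e0 w t))%:R.
Proof.
elim: t e => [|t IH] e /=.
  case: eqP => h.
    by rewrite meval_lec /= eqxx.
  rewrite meval0; case: eqP => // ee; by rewrite ee Htail in h.
rewrite rmorph_sum /=.
under eq_bigr do rewrite rmorphM /= meval_lec IH.
have [lt|ge] := ltnP t (size w); last first.
  rewrite big1; first by rewrite ltnNge (leq_trans ge (leqnSn t)).
  by move=> e' _; rewrite mulr0.
pose et := nth e0 w t.
rewrite big_mkcond (bigD1 et) // big1 ?addr0; last first.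
  by move=> e' ne; case: ifP => // _; rewrite (negbTE ne) andbF mulr0.
have chiE : chi (inl (inr (et, e))) = (et \in w) && ((index et w).+1 < size w)%N
   && (e == nth e0 w (index et w).+1) by [].
have mt : et \in w by rewrite mem_nth.
have hi : index et w = t by apply: index_uniq.
rewrite chiE mt hi /= addr0 eqxx mulr1.
case: ifP => hh.
  by case: (t.+1 < size w)%N.
case: (ltnP t.+1 (size w)) => h2 //=.
case: eqP => // ee; exfalso; move/negbT: hh; rewrite ee /et.
move/pathP: Hpath => /(_ e0 t); rewrite -ltnS => /(_ h2).
by rewrite /lrel => ->.
Qed.

Lemma tcoef_eval k : meval vv (tcoef F N i j k) = (k == size es)%:R.
Proof.
rewrite rmorph_sum /=.
under eq_bigr do rewrite rmorphM /= meval_lec gpath_eval.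
pose el := last e0 es.
rewrite big_mkcond (bigD1 el) //= big1 ?addr0; last first.
  move=> e' ne; case: ifP => // _; by rewrite /= (negbTE ne) andbF mulr0.
rewrite Hhead eqxx /= !eqxx mulr1 /el (last_nth e0).
have ls : (size es < size w)%N by [].
have [lt|ge] := ltnP k (size w); last first.
  rewrite /=; case: eqP => // ek; by move: ge; rewrite ek /= ltnn.
by rewrite /= (nth_uniq e0 ls lt Huniq) eq_sym.
Qed.

Lemma Meval_eval (alpha : F) r : alpha != 0 -> (size es < #|link N|)%N ->
  meval vv (Meval N alpha i j r) != 0.
Proof.
move=> na hs; rewrite /Meval -horner_map /= mevalC /Mpoly rmorph_sum /=.
under eq_bigr do rewrite rmorphM /= map_polyC map_polyXn /= tcoef_eval.
rewrite horner_sum (bigD1 (Ordinal hs)) //= big1 ?addr0.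
  by rewrite eqxx hornerCM hornerXn mul1r expf_neq0 // expf_neq0.
move=> k ne; rewrite hornerCM.
have -> : ((k : nat) == size es) = false.
  apply/negbTE; apply: contra ne => /eqP e; apply/eqP/val_inj => /=; exact: e.
by rewrite mul0r.
Qed.

End Eval.

Theorem theorem4
  (p m : nat) (F : finFieldType) (N : network) (n' : nat) (alpha : F)
  (Hp : prime p) (HF : #|F| = (p ^ m)%N)
  (Hn' : (0 < n')%N)
  (Hpn : ~~ (p %| (n'.*2).+1)%N)
  (Hnm : ((n'.*2).+1 %| p ^ m - 1)%N)
  (Halpha : ((n'.*2).+1).-primitive_root alpha)
  (Hacyc : acyclic N)
  (Hcut_ii : forall i : 'I_3, mincut (src N i) (dst N i) = 1%N)
  (Hcut_ij : forall i j : 'I_3, i != j -> (1 <= mincut (src N i) (dst N j))%N)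
  (Hrank : rank_conditions
     (Mhat (@to_ratfun F N) alpha n')) :
  exists (L : fieldExtType F) (eps : LEC N -> L),
    (forall i j : 'I_3, Mhat (lec_eval eps) alpha n' i j \in unitmx) /\
    decodable (Mhat (lec_eval eps) alpha n').
Proof.
have alpha_nz : alpha != 0.
  apply/eqP => a0; have := prim_expr_order Halpha; rewrite a0 expr0n /=.
  by move/eqP; rewrite eq_sym oner_eq0.
pose a i j r := Meval N alpha i j r.
have anz : forall i j r, a i j r != 0.
  move=> i j r.
  have hc : (1 <= mincut (src N i) (dst N j))%N.
    by case: (eqVneq i j) => [<-|ne]; [rewrite Hcut_ii | exact: Hcut_ij].
  have [e0 [es [ht hp hh hu]]] := walk_exists Hacyc (mincut_reach hc).
  have hs : (size es < #|link N|)%N.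
    by rewrite cardE; apply: (uniq_leq_size hu) => x _; rewrite mem_enum.
  have := Meval_eval (F:=F) ht hp hh hu r alpha_nz hs.
  by apply: contra => /eqP; rewrite /a => ->; rewrite rmorph0.
pose df i j r := to_ratfun (a i j r).
have dfnz : forall i j r, df i j r != 0 by move=> i j r; rewrite /df /to_ratfun tofrac_eq0.
have Hr : rank_conditions (Mhd df) := Hrank.
case: Hr => r1 r2 r3.
pose D1 := \det (castmx (erefl, eqA n') (B1 a)).
pose D2 := \det (castmx (erefl, eqB n') (B2 a)).
pose D3 := \det (castmx (erefl, eqB n') (B3 a)).
have tof : forall q : {mpoly F[nLEC N]}, to_ratfun q != 0 -> q != 0.
  by move=> q; rewrite /to_ratfun tofrac_eq0.
have D1nz : D1 != 0.
  apply: tof; have := (rank_A1 dfnz).1 r1.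
  by rewrite -(map_B1 (@tofrac _)) -map_castmx' det_map_mx.
have D2nz : D2 != 0.
  apply: tof; have := (rank_A2 dfnz).1 r2.
  by rewrite -(map_B2 (@tofrac _)) -map_castmx' det_map_mx.
have D3nz : D3 != 0.
  apply: tof; have := (rank_A3 dfnz).1 r3.
  by rewrite -(map_B3 (@tofrac _)) -map_castmx' det_map_mx.
pose Q := D1 * D2 * D3 * \prod_(i : 'I_3) \prod_(j : 'I_3) \prod_(r < (n'.*2).+1) a i j r.
have Qnz : Q != 0.
  rewrite /Q. apply: mulf_neq0. apply: mulf_neq0. apply: mulf_neq0. exact D1nz. exact D2nz. exact D3nz.
  apply/(prodf_neq0 _ _) => i _. apply/(prodf_neq0 _ _) => j _. apply/(prodf_neq0 _ _) => r _. exact: anz.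
have [L [rs [urs Krs]]] := big_ext Hp HF (msize Q).
have bnd : forall mm, Q@_mm != 0 -> forall k, (mm k < msize Q)%N.
  move=> mm nz k; have := @msize_mdeg_lt _ _ Q mm; rewrite mcoeff_msupp => /(_ nz).
  by apply: leq_ltn_trans; rewrite mdegE (bigD1 k) //= leq_addr.
have [v hv] := point_exists (in_alg L) urs Krs Qnz bnd.
pose eps : LEC N -> L := fun l => v (enum_rank l).
pose rho := (mmap (in_alg L) (fun k => eps (enum_val k)) : {mpoly F[nLEC N]} -> L)
   : {rmorphism {mpoly F[nLEC N]} -> L}.
have rhoQ : rho Q != 0.
  by rewrite /= (mmap_ext _ (h2 := v)) // => k; rewrite /eps enum_valK.
move: rhoQ; rewrite /Q !rmorphM !mulf_eq0 !negb_or => /andP[/andP[/andP[R1 R2] R3] Rp].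
pose dL i j r := rho (a i j r).
have dLnz : forall i j (r : 'I_(n'.*2).+1), dL i j r != 0.
  move=> i j r; move: Rp; rewrite rmorph_prod => /(prodf_neq0 _ _) /(_ i isT).
  rewrite rmorph_prod => /(prodf_neq0 _ _) /(_ j isT).
  by rewrite rmorph_prod => /(prodf_neq0 _ _) /(_ r isT).
exists L, eps; split.
  move=> i j; exact: (MhdU dLnz i j).
apply: (decode dLnz); split.
- apply/(rank_A1 dLnz); rewrite -(map_B1 rho) -map_castmx' det_map_mx; exact: R1.
- apply/(rank_A2 dLnz); rewrite -(map_B2 rho) -map_castmx' det_map_mx; exact: R2.
- apply/(rank_A3 dLnz); rewrite -(map_B3 rho) -map_castmx' det_map_mx; exact: R3.
Qed.
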